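(* Let $G=(V,E,w)$ be a weighted digraph whose underlying graph has maximum degree $\hat{\Delta}$, and let $w_{\max}>0$ be the maximum edge weight. Let $m=\left\lfloor\frac{1-\epsilon}{w_{\max}}\right\rfloor$, i.e. $m$ is the largest integer with $m\,w_{\max}<1$. Then \[\chi_w(G)\le\left\lceil\frac{\hat{\Delta}}{m+1}\right\rceil+1.\]
   Context: A weighted digraph is $G=(V,E,w)$ with $w:E\to[0,1]$; its underlying graph is obtained by ignoring weights and directions. A $k$-coloring is a map $c:V\to\{1,\dots,k\}$, and $c[v]$ denotes the set of vertices with color $c(v)$. For $S\subseteq V$, $d^-_S(v)=\sum_{u\in S,(u,v)\in E}w(u,v)$. A weighted improper $k$-coloring is a $k$-coloring with $d^-_{c[v]}(v)<1$ for every $v$; $\chi_w(G)$ is the minimum $k$ for which one exists. In the paper's notation $\epsilon$ is an arbitrarily small positive quantity, so that $\lfloor(1-\epsilon)/w\rfloor$ is the largest integer $m$ with $mw<1$. *)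

(* Defs.v *)
From mathcomp Require Import all_boot all_order all_algebra.
Set Implicit Arguments. Unset Strict Implicit. Unset Printing Implicit Defensive.
Import Order.TTheory GRing.Theory Num.Theory.
Local Open Scope ring_scope.

(* A weighted digraph G = (V, E, w): V a finite vertex type, E : rel V the
   (directed) arc relation, w : V -> V -> R the weights (only w u v with
   E u v is meaningful).  Digraphs are loopless (E irreflexive), and
   weights lie in [0,1]; these are hypotheses of the theorem. *)

Section WDigraph.
Variables (R : realFieldType) (V : finType) (E : rel V) (w : V -> V -> R).

Definition din (S : {set V}) (v : V) : R :=
  \sum_(u in S | E u v) w u v.

Definition color_class k (c : {ffun V -> 'I_k}) (v : V) : {set V} :=
  [set u | c u == c v].

(* weighted improper k-colouring (colours 'I_k, i.e. {1..k} shifted) *)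
Definition wimproper k (c : {ffun V -> 'I_k}) : bool :=
  [forall v, din (color_class c v) v < 1].

Definition wcolorable (k : nat) : bool :=
  [exists c : {ffun V -> 'I_k}, wimproper c].

(* For a
   loopless digraph, k = #|V| always works (distinct colours), so the least
   such k lies in [0, #|V|] and is found by searching that range. *)
Definition chi_w : nat := find wcolorable (iota 0 #|V|.+1).

Definition udeg (v : V) : nat := #|[set u | (u != v) && (E u v || E v u)]|.
Definition max_udeg : nat := \max_(v : V) udeg v.

Definition wmax : R := \big[Num.max/0]_(u : V) \big[Num.max/0]_(v : V | E u v) w u v.

End WDigraph.

(* Main.v *)
Require Import Defs.
From mathcomp Require Import all_boot all_order all_algebra.
Import Order.TTheory GRing.Theory Num.Theory.
From mathcomp Require Import zify.

Module CombM.
Set Implicit Arguments.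
Section Comb.
Variables (V : finType) (N : rel V).
Hypothesis Nirr : forall x, N x x = false.
Hypothesis Nsym : forall x y, N x y = N y x.

Definition bb j (c : {ffun V -> 'I_j}) x y : nat := N x y && (c y == c x).
Definition cntc j (c : {ffun V -> 'I_j}) v a : nat := \sum_y (N v y && (c y == a)).
Definition pot j (c : {ffun V -> 'I_j}) := \sum_x \sum_y bb c x y.

Lemma sum_ind (F : V -> nat) v : \sum_x (x == v) * F x = F v.
Proof.
rewrite (bigD1 v) //= eqxx mul1n big1 ?addn0 // => x /negbTE -> //.
Qed.

Lemma recolor_pt j (c : {ffun V -> 'I_j}) v a :
  let c' := [ffun z => if z == v then a else c z] in
  forall x y, bb c' x y + (x == v) * bb c x y + (y == v) * bb c x y
   = bb c x y + (x == v) * (N x y && (c y == a)) + (y == v) * (N x y && (c x == a)).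
Proof.
  move=> c' x y; rewrite /bb /c' !ffunE.
  case: (eqVneq x v) => [->|xv]; case: (eqVneq y v) => [->|yv] /=;
    rewrite ?Nirr ?eqxx //=.
  - case: (N v y) => //=; case: (c y == a); case: (c y == c v) => //.
  - case: (N x v) => //=; rewrite [c v == c x]eq_sym [a == c x]eq_sym;
    case: (c x == a); case: (c x == c v) => //.
Qed.

Lemma recolor j (c : {ffun V -> 'I_j}) v a :
  let c' := [ffun z => if z == v then a else c z] in
  pot c' + 2 * cntc c v (c v) = pot c + 2 * cntc c v a.
Proof.
move=> c'.
have S1 : \sum_x \sum_y ((x == v) * bb c x y) = cntc c v (c v).
  under eq_bigr => x _ do rewrite -big_distrr /=.
  by rewrite (sum_ind (fun x => \sum_y bb c x y)).
have S2 : \sum_x \sum_y ((y == v) * bb c x y) = cntc c v (c v).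
  under eq_bigr => x _ do rewrite (sum_ind (fun y => bb c x y)).
  apply: eq_bigr => x _; rewrite /bb Nsym eq_sym //.
have S3 : \sum_x \sum_y ((x == v) * (N x y && (c y == a))) = cntc c v a.
  under eq_bigr => x _ do rewrite -big_distrr /=.
  by rewrite (sum_ind (fun x => \sum_y (N x y && (c y == a)):nat)).
have S4 : \sum_x \sum_y ((y == v) * (N x y && (c x == a))) = cntc c v a.
  under eq_bigr => x _ do rewrite (sum_ind (fun y => (N x y && (c x == a)):nat)).
  apply: eq_bigr => x _; rewrite Nsym //.
have E : \sum_x \sum_y (bb c' x y + (x == v) * bb c x y + (y == v) * bb c x y)
   = \sum_x \sum_y (bb c x y + (x == v) * (N x y && (c y == a)) + (y == v) * (N x y && (c x == a))).
  by apply: eq_bigr => x _; apply: eq_bigr => y _; apply: recolor_pt.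
move: E; rewrite /pot.
under eq_bigr => x _ do rewrite !big_split /=.
under [X in _ = X -> _]eq_bigr => x _ do rewrite !big_split /=.
rewrite !big_split /= S1 S2 S3 S4 => E.
by rewrite !mul2n -!addnn !addnA.
Qed.

Lemma good_coloring j (Hj : 0 < j) m
  (HD : forall v, \sum_y (N v y : nat) < m.+1 * j) :
  exists c : {ffun V -> 'I_j}, forall v, cntc c v (c v) <= m.
Proof.
pose c0 : {ffun V -> 'I_j} := [ffun _ => Ordinal Hj].
case: (arg_minnP (@pot j) (isT : predT c0)) => c _ Hmin.
exists c => v; rewrite leqNgt; apply/negP => Hbig.
have [a Ha] : exists a, cntc c v a <= m.
  case: (pickP (fun a : 'I_j => cntc c v a <= m)) => [a Ha' | Hall]; first by exists a.
  exfalso.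
  have : m.+1 * j <= \sum_(a < j) cntc c v a.
    rewrite mulnC -[j in j * _]card_ord -sum_nat_const.
    by apply: leq_sum => a _; have := Hall a; rewrite /= => /negbT; rewrite -ltnNge.
  rewrite /cntc exchange_big /=.
  have -> : \sum_y \sum_(a < j) (N v y && (c y == a) : nat) = \sum_y (N v y : nat).
    apply: eq_bigr => y _; rewrite (bigD1 (c y)) //= eqxx andbT big1 ?addn0 //.
    by move=> i /negbTE; rewrite eq_sym => ->; rewrite andbF.
  by rewrite leqNgt HD.
have := recolor c v a.
have := Hmin [ffun z => if z == v then a else c z] isT.
move=> H1 H2.
have : pot c + 2 * cntc c v a < pot c + 2 * cntc c v (c v).
  rewrite ltn_add2l ltn_pmul2l //; exact: leq_ltn_trans Ha Hbig.
rewrite -H2. rewrite ltn_add2r. by rewrite ltnNge H1.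
Qed.
End Comb.
End CombM.
Import CombM.

Local Open Scope ring_scope.

Theorem theorem3p3 (R : realFieldType) (V : finType) (E : rel V)
    (w : V -> V -> R) (m : nat) :
  irreflexive E ->
  (forall u v, E u v -> 0 <= w u v <= 1) ->
  0 < wmax E w ->
  m%:R * wmax E w < 1 ->
  1 <= m.+1%:R * wmax E w ->
  (chi_w E w <= (max_udeg E + m) %/ m.+1 + 1)%N.
Proof.
move=> Eirr Hw Hwpos Hm _.
pose N := fun x y : V => (x != y) && (E x y || E y x).
have Nirr : forall x, N x x = false by move=> x; rewrite /N eqxx.
have Nsym : forall x y, N x y = N y x by move=> x y; rewrite /N eq_sym orbC.
set D := max_udeg E.
set k := ((D + m) %/ m.+1 + 1)%N.
have HDk : (D < m.+1 * k)%N.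
  rewrite /k; have := divn_eq (D + m) m.+1; have := ltn_pmod (D + m) (ltn0Sn m); lia.
have Hudeg : forall v, udeg E v = (\sum_y (N v y : nat))%N.
  move=> v; rewrite /udeg -sum1_card big_mkcond /=.
  apply: eq_bigr => u _; rewrite inE /N [v == u]eq_sym orbC; by case: ifP.
have HudD : forall v, (udeg E v <= D)%N by move=> v; apply: leq_bigmax.
have HudV : forall v, (udeg E v < #|V|)%N.
  move=> v; rewrite /udeg.
  have : (#|[set u | (u != v) && (E u v || E v u)]| <= #|[set~ v]|)%N.
    apply: subset_leq_card; apply/subsetP => u; rewrite !inE => /andP[] //.
  rewrite cardsC1 => /leq_ltn_trans; apply.
  rewrite prednK //; apply/card_gt0P; by exists v.
have chi_le : forall j (c : {ffun V -> 'I_j}), wimproper E w c -> (j < #|V|.+1)%N -> (chi_w E w <= j)%N.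
  move=> j c Hc Hj; rewrite /chi_w leqNgt; apply/negP => H.
  have := before_find 0%N H; rewrite nth_iota // add0n => /negbT /negP; apply.
  by rewrite /wcolorable; apply/existsP; exists c.
case: (posnP #|V|) => [V0|Vpos].
  rewrite /chi_w; apply: (leq_trans (find_size _ _)); rewrite size_iota V0 /k; lia.
pose j := minn k #|V|.
have jpos : (0 < j)%N by rewrite /j leq_min Vpos /k addn1.
have HDj : forall v, (\sum_y (N v y : nat) < m.+1 * j)%N.
  move=> v; rewrite -Hudeg /j; case: (leqP k #|V|) => _.
    exact: leq_ltn_trans (HudD v) HDk.
  apply: (leq_trans (HudV v)); rewrite leq_pmull //.
have [c Hc] := (@good_coloring V N Nirr Nsym j jpos m HDj).
have wle : forall u v, E u v -> w u v <= wmax E w.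
  move=> u v Euv; rewrite /wmax.
  apply: le_trans (le_bigmax _ _ u).
  exact: (le_bigmax_cond _ _ Euv).
apply: (@leq_trans j); last by rewrite /j geq_minl.
apply: (chi_le _ c); last by rewrite ltnS /j geq_minr.
apply/forallP => v; rewrite /din.
apply: (le_lt_trans _ Hm).
apply: (@le_trans _ _ (\sum_u ((N v u && (c u == c v) : nat)%:R * wmax E w))).
  rewrite big_mkcond /=; apply: ler_sum => u _.
  rewrite /color_class inE.
  case: ifP => [/andP[Hu Euv]|_]; last by apply: mulr_ge0; [exact: ler0n | exact: ltW].
  have -> : N v u by rewrite /N Euv orbT andbT; apply/eqP => vu; rewrite vu Eirr in Euv.
  by rewrite Hu /= mul1r; apply: wle.
rewrite -mulr_suml -natr_sum; apply: ler_wpM2r; first exact: ltW.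
by rewrite ler_nat; exact: (Hc v).
Qed.
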